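(* Let $G_{l_1+l_2}$ be the two-layer stochastic block model $G(n,n_1,n_2,p_1,p_2)$ satisfying the standing assumptions below, and let $e_{22}$ and $e_{2out}$ be the expected numbers of internal and outgoing edges of a community of the ground-truth layer $l_2$. If $3e_{22}>e_{2out}$, then for every partition $l'_2$ close to $l_2$, the (expected) modularity of $l_2$ in $G_{l_1+l_2}$ is strictly larger than that of $l'_2$, i.e. $Q_{l_2}>Q_{l'_2}$.
   Context: Multi-layer stochastic block model $G(n,n_1,\dots,n_L,p_1,\dots,p_L)$: a random graph on $n$ nodes with $L$ layers. For each layer $l$ the nodes are partitioned into $n_l$ planted communities of size $s_l=n/n_l$; independently for each layer, each pair of distinct nodes in a common community of layer $l$ receives an edge from layer $l$ with probability $p_l$; the graph is the simple union of all generated edges. The partitions of different layers are independent: for any $k\ge 2$ distinct layers and any choice of one community from each, their intersection has $n/(n_{l_1}\cdots n_{l_k})$ nodes (in expectation). Standing assumptions: $n_l\ge 4$, $p_l\in[0.05,1]$ for every layer, and $n\ge 2\prod_l n_l$. Modularity: for a partition of the nodes of a graph with $e$ edges, if community $i$ has $e^i_{in}$ internal edges, $e^i_{out}$ edges with exactly one endpoint in it, and total degree $d^i=2e^i_{in}+e^i_{out}$, the modularity is $Q=\sum_i\big(\frac{e^i_{in}}{e}-(\frac{d^i}{2e})^2\big)$; here all edge counts are replaced by their expected values in the model. Close partitions: a partition $l'$ is close to a partition $l$ if $l'$ is obtained from $l$ by one of: (1) moving one node from its community to another community; (2) exchanging the community memberships of two nodes; (3) separating one node from its community to form a new singleton community.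 *)

(* Defs.v *)
From HB Require Import structures.
From mathcomp Require Import all_boot all_order all_algebra.
Set Implicit Arguments. Unset Strict Implicit. Unset Printing Implicit Defensive.
Import Order.TTheory GRing.Theory Num.Theory.
Local Open Scope ring_scope.

(* Nodes of G(n, n1, n2, p1, p2) with n = n1 * n2 * m: a node is a triple
   (layer-1 community, layer-2 community, index inside the intersection). *)
Definition node (n1 n2 m : nat) : finType := ('I_n1 * 'I_n2 * 'I_m)%type.

Definition comm1 {n1 n2 m} (x : node n1 n2 m) : 'I_n1 := x.1.1.
Definition comm2 {n1 n2 m} (x : node n1 n2 m) : 'I_n2 := x.1.2.

Definition edge_prob {R : realFieldType} {n1 n2 m} (p1 p2 : R)
  (x y : node n1 n2 m) : R :=
  if x == y then 0
  else 1 - (1 - (comm1 x == comm1 y)%:R * p1) * (1 - (comm2 x == comm2 y)%:R * p2).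

Section Modularity.
Variables (R : realFieldType) (n1 n2 m : nat) (p1 p2 : R).
Local Notation V := (node n1 n2 m).
Local Notation w := (@edge_prob R n1 n2 m p1 p2).

Definition e_tot : R := (\sum_(x : V) \sum_(y : V) w x y) / 2.
Definition e_in (C : {set V}) : R := (\sum_(x in C) \sum_(y in C) w x y) / 2.
Definition e_out (C : {set V}) : R := \sum_(x in C) \sum_(y in ~: C) w x y.
Definition deg (C : {set V}) : R := 2 * e_in C + e_out C.

Definition modularity (P : {set {set V}}) : R :=
  \sum_(C in P) (e_in C / e_tot - (deg C / (2 * e_tot)) ^+ 2).
End Modularity.

Definition layer2_partition (n1 n2 m : nat) : {set {set node n1 n2 m}} :=
  [set [set x : node n1 n2 m | comm2 x == j] | j : 'I_n2].

Section Close.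
Variable T : finType.

Definition move_node (P : {set {set T}}) (v : T) (C : {set T}) : {set {set T}} :=
  ((P :\ pblock P v :\ C) :|: [set pblock P v :\ v; v |: C]) :\ set0.

Definition exchange_nodes (P : {set {set T}}) (u v : T) : {set {set T}} :=
  (P :\ pblock P u :\ pblock P v)
    :|: [set v |: (pblock P u :\ u); u |: (pblock P v :\ v)].

Definition separate_node (P : {set {set T}}) (v : T) : {set {set T}} :=
  (P :\ pblock P v) :|: [set pblock P v :\ v; [set v]].

Definition close_partition (P P' : {set {set T}}) : Prop :=
  (exists v C, C \in P /\ C != pblock P v /\ P' = move_node P v C)
  \/ (exists u v, pblock P u != pblock P v /\ P' = exchange_nodes P u v)
  \/ (exists v, pblock P v != [set v] /\ P' = separate_node P v).
End Close.

(* Main.v *)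
Require Import Defs.
From HB Require Import structures.
From mathcomp Require Import all_boot all_order all_algebra.
From mathcomp Require Import zify ring lra.
Import Order.TTheory GRing.Theory Num.Theory.
Local Open Scope ring_scope.

Section S.
Variables (R : realFieldType) (n1 n2 m : nat) (p1 p2 : R).
Local Notation V := (node n1 n2 m).
Local Notation w := (@edge_prob R n1 n2 m p1 p2).
Definition ws (x : V) (S : {set V}) : R := \sum_(y in S) w x y.
Definition Cj (j : 'I_n2) : {set V} := [set x : V | comm2 x == j].
Definition qq : R := p1 + p2 - p1 * p2.

Lemma w_sym x y : w x y = w y x.
Proof. by rewrite /edge_prob eq_sym [comm1 y == _]eq_sym [comm2 y == _]eq_sym. Qed.
Lemma w_diag x : w x x = 0.
Proof. by rewrite /edge_prob eqxx. Qed.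

Lemma w_g (x y : V) : w x y =
  (comm1 x == comm1 y)%:R * p1 + (comm2 x == comm2 y)%:R * p2
  - (comm1 x == comm1 y)%:R * (comm2 x == comm2 y)%:R * (p1 * p2) - (x == y)%:R * qq.
Proof.
rewrite /edge_prob /qq; case: eqVneq => [->|_]; rewrite ?eqxx /=; ring.
Qed.

Lemma delta_sum (T : finType) (P : pred T) (x : T) (c : R) :
  \sum_(y | P y) (x == y)%:R * c = (P x)%:R * c.
Proof.
case Px: (P x).
  rewrite (bigD1 x) //= eqxx big1 ?addr0 // => y /andP[_ /negbTE].
  by rewrite eq_sym => ->; rewrite mul0r.
rewrite big1 ?mul0r // => y Py; case: eqP => [xy|]; last by rewrite mul0r.
by move: Px; rewrite xy Py.
Qed.

Lemma sum_node (F : V -> R) :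
  \sum_(y : V) F y = \sum_(i : 'I_n1) \sum_(j : 'I_n2) \sum_(k : 'I_m) F ((i, j), k).
Proof.
transitivity (\sum_(p : V) F (p.1, p.2)); first by apply: eq_bigr => -[].
rewrite -(pair_big predT predT (fun a b => F (a, b))) /=.
transitivity (\sum_(a : 'I_n1 * 'I_n2) \sum_(k : 'I_m) F ((a.1, a.2), k)).
  by apply: eq_bigr => -[].
by rewrite -(pair_big predT predT (fun i j => \sum_(k : 'I_m) F ((i, j), k))).
Qed.
Lemma sum_delta_if (T : finType) (j : T) (H : T -> R) :
  \sum_(j' : T) (if j' == j then H j' else 0) = H j.
Proof. by rewrite -big_mkcond big_pred1_eq. Qed.

Lemma sum_const_if (T : finType) (b : bool) (c : R) :
  \sum_(k : T) (if b then c else 0) = if b then c *+ #|T| else 0.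
Proof. by case: b; [rewrite sumr_const | rewrite big1]. Qed.

Lemma ws_Cj (x : V) (j : 'I_n2) : ws x (Cj j) =
  m%:R * p1 + (comm2 x == j)%:R * (n1%:R * m%:R * p2 - m%:R * (p1 * p2) - qq).
Proof.
rewrite /ws; under eq_bigr => y _ do rewrite w_g.
rewrite sumrB (delta_sum _ (fun y => y \in Cj j)) inE.
rewrite big_mkcond sum_node /=.
case: x => [[i0 j0] k0]; rewrite /comm1 /comm2 /= .
under eq_bigr => i _ do under eq_bigr => j' _ do under eq_bigr => k _ do rewrite /Cj inE /comm2 /=.
under eq_bigr => i _ do under eq_bigr => j' _ do rewrite sum_const_if.
under eq_bigr => i _ do rewrite -big_mkcond big_pred1_eq card_ord.
rewrite (eq_bigr (fun i => (i0 == i)%:R * (m%:R * (p1 - (j0 == j)%:R * (p1 * p2))) + m%:R * ((j0 == j)%:R * p2))); last first.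
  by move=> i _; rewrite -mulr_natl; ring.
rewrite big_split /= (delta_sum _ (fun _ => true)) sumr_const card_ord /= -mulr_natl.
rewrite /qq; ring.
Qed.
Definition Dx (x : V) : R := \sum_(y : V) w x y.

Lemma Dx_val (x : V) : Dx x =
  n2%:R * (m%:R * p1) + (n1%:R * m%:R * p2 - m%:R * (p1 * p2) - qq).
Proof.
rewrite /Dx (partition_big (fun y => comm2 y) predT) //=.
rewrite (eq_bigr (fun j => ws x (Cj j))); last first.
  by move=> j _; rewrite /ws; apply: eq_bigl => y; rewrite /Cj inE.
under eq_bigr => j _ do rewrite ws_Cj.
by rewrite big_split /= (delta_sum _ (fun _ => true)) sumr_const card_ord -[m%:R * p1 *+ n2]mulr_natl mul1r.
Qed.

Lemma card_Cj j : #|Cj j| = (n1 * m)%N.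
Proof.
apply/eqP; rewrite -(eqr_nat R) -[_%:R]mul1r -mulr_natr -sumr_const.
rewrite big_mkcond sum_node /=.
under eq_bigr => i _ do under eq_bigr => j' _ do under eq_bigr => k _ do rewrite /Cj inE /comm2 /=.
under eq_bigr => i _ do under eq_bigr => j' _ do rewrite sum_const_if.
under eq_bigr => i _ do rewrite -big_mkcond big_pred1_eq card_ord.
by rewrite !mul1r sumr_const card_ord natrM mulr_natl.
Qed.

Lemma e_inD1 (S : {set V}) (v : V) : v \in S -> e_in p1 p2 (S :\ v) = e_in p1 p2 S - ws v S.
Proof.
move=> vS; rewrite /e_in.
have -> : \sum_(x in S) \sum_(y in S) w x y =
  \sum_(x in S :\ v) \sum_(y in S :\ v) w x y + 2 * ws v S.
  rewrite (big_setD1 v) //=.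
  rewrite [X in _ + X = _](eq_bigr (fun x => w x v + \sum_(y in S :\ v) w x y)); last first.
    by move=> x _; rewrite (big_setD1 v vS).
  rewrite big_split /=.
  have -> : \sum_(i in S :\ v) w i v = ws v S.
    rewrite /ws (big_setD1 v vS) /= w_diag add0r.
    by apply: eq_bigr => x _; rewrite w_sym.
  rewrite /ws; ring.
by field.
Qed.

Lemma e_inU1 (S : {set V}) (v : V) : v \notin S -> e_in p1 p2 (v |: S) = e_in p1 p2 S + ws v S.
Proof.
move=> vS; have := @e_inD1 (v |: S) v (setU11 v S); rewrite setU1K //.
rewrite /ws big_setU1 //= w_diag add0r => ->; ring.
Qed.

Lemma ws_split (x : V) (S : {set V}) : ws x S + ws x (~: S) = Dx x.
Proof.
rewrite /ws /Dx [RHS](bigID (fun y => y \in S)) /=; congr (_ + _).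
by apply: eq_bigl => y; rewrite inE.
Qed.

Definition cc : R := n1%:R * m%:R * p2 - m%:R * (p1 * p2) - qq.
Definition aa : R := m%:R * p1 + cc.
Definition bb : R := m%:R * p1.
Definition DD : R := n2%:R * (m%:R * p1) + cc.
Definition NN : R := (n1 * n2 * m)%:R.
Definition ss : R := (n1 * m)%:R.
Definition P0 := layer2_partition n1 n2 m.

Lemma ws_same (x : V) : ws x (Cj (comm2 x)) = aa.
Proof. by rewrite ws_Cj eqxx mul1r. Qed.
Lemma ws_diff (x : V) j : comm2 x != j -> ws x (Cj j) = bb.
Proof. by move=> /negbTE h; rewrite ws_Cj h mul0r addr0. Qed.
Lemma Dx_DD x : Dx x = DD.
Proof. by rewrite Dx_val. Qed.

Lemma deg_val (S : {set V}) : deg p1 p2 S = #|S|%:R * DD.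
Proof.
rewrite /deg /e_in /e_out mulrC divfK ?pnatr_eq0 //.
rewrite -big_split /=.
rewrite (eq_bigr (fun _ => DD)); last by move=> x _; rewrite -(Dx_DD x) -(ws_split x S).
by rewrite sumr_const mulr_natl.
Qed.

Lemma cardV : #|V| = (n1 * n2 * m)%N.
Proof. by rewrite /node !card_prod !card_ord. Qed.

Lemma e_tot_val : e_tot n1 n2 m p1 p2 = NN * DD / 2.
Proof.
rewrite /e_tot (eq_bigr (fun _ => DD)); last by move=> x _; rewrite -(Dx_DD x).
by rewrite sumr_const cardV mulr_natl.
Qed.

Lemma e_in_Cj j : e_in p1 p2 (Cj j) = ss * aa / 2.
Proof.
rewrite /e_in (eq_bigr (fun _ => aa)); last first.
  by move=> x; rewrite inE => /eqP <-; rewrite -(ws_same x).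
by rewrite sumr_const card_Cj mulr_natl.
Qed.

Lemma e_out_Cj j : e_out p1 p2 (Cj j) = ss * (DD - aa).
Proof.
rewrite /e_out (eq_bigr (fun _ => DD - aa)); last first.
  move=> x; rewrite inE => /eqP <-; rewrite -(Dx_DD x) -(ws_split x (Cj (comm2 x))) ws_same.
  rewrite /ws; ring.
by rewrite sumr_const card_Cj mulr_natl.
Qed.

Lemma e_in_set1 (v : V) : e_in p1 p2 [set v] = 0.
Proof. by rewrite /e_in !big_set1 w_diag mul0r. Qed.

Lemma e_in_set0 : e_in p1 p2 (set0 : {set V}) = 0.
Proof. by rewrite /e_in big_set0 mul0r. Qed.

Lemma Cj_in j : Cj j \in P0.
Proof. by apply/imsetP; exists j. Qed.

Lemma blockE (S : {set V}) (y : V) : S \in P0 -> y \in S -> S = Cj (comm2 y).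
Proof. by case/imsetP => j _ ->; rewrite inE => /eqP ->. Qed.

Lemma pblockE x : pblock P0 x = Cj (comm2 x).
Proof.
rewrite /pblock; case: pickP => [B /andP[BP xB] | none] /=.
  exact: blockE BP xB.
by have := none (Cj (comm2 x)); rewrite /= Cj_in inE eqxx.
Qed.

Lemma w_ge0 (x y : V) : 0 <= p1 <= 1 -> 0 <= p2 <= 1 -> 0 <= w x y.
Proof.
move=> /andP[h1 h1'] /andP[h2 h2']; rewrite /edge_prob; case: (x == y) => //.
case: (comm1 x == comm1 y); case: (comm2 x == comm2 y) => /=; nra.
Qed.

Lemma sum_D0 (F : {set V} -> R) (A : {set {set V}}) :
  F set0 = 0 -> \sum_(S in A :\ set0) F S = \sum_(S in A) F S.
Proof.
move=> F0; case A0: (set0 \in A); first by rewrite [RHS](big_setD1 set0) //= F0 add0r.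
apply: eq_bigl => S; rewrite in_setD1; case: eqP => [->|_] /=; by rewrite ?A0.
Qed.

Lemma sum_swap (F : {set V} -> R) (P : {set {set V}}) (B C X Y : {set V}) :
  B \in P -> C \in P -> B != C -> X \notin P -> Y \notin P -> X != Y ->
  F X + F Y < F B + F C ->
  \sum_(S in (P :\ B :\ C) :|: [set X; Y]) F S < \sum_(S in P) F S.
Proof.
move=> BP CP BC XP YP XY H.
rewrite [X in _ < X](big_setD1 B BP) /= [X in _ < _ + X](big_setD1 C) /=; last by rewrite in_setD1 eq_sym BC.
rewrite setUC -setUA big_setU1 /=; last first.
  by rewrite in_setU1 negb_or XY !in_setD1 (negbTE XP) !andbF.
rewrite big_setU1 /=; last by rewrite !in_setD1 (negbTE YP) !andbF.
lra.
Qed.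

Lemma sum_swap1 (F : {set V} -> R) (P : {set {set V}}) (B X Y : {set V}) :
  B \in P -> X \notin P -> Y \notin P -> X != Y ->
  F X + F Y < F B ->
  \sum_(S in (P :\ B) :|: [set X; Y]) F S < \sum_(S in P) F S.
Proof.
move=> BP XP YP XY H.
rewrite [X in _ < X](big_setD1 B BP) /=.
rewrite setUC -setUA big_setU1 /=; last first.
  by rewrite in_setU1 negb_or XY !in_setD1 (negbTE XP) !andbF.
rewrite big_setU1 /=; last by rewrite !in_setD1 (negbTE YP) !andbF.
lra.
Qed.

Definition FF (S : {set V}) : R :=
  (2 * NN * e_in p1 p2 S - (#|S|%:R) ^+ 2 * DD) / (NN ^+ 2 * DD).

Lemma modularity_FF (P : {set {set V}}) : 0 < NN -> 0 < DD ->
  modularity p1 p2 P = \sum_(S in P) FF S.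
Proof.
move=> hN hD; apply: eq_bigr => S _; rewrite /FF deg_val e_tot_val.
move: (hN); rewrite /NN ltr0n !muln_gt0 => /andP[/andP[a b] c].
field; by rewrite gt_eqF //= !pnatr_eq0 -!lt0n a b c.
Qed.

Lemma FF0 : FF set0 = 0.
Proof. by rewrite /FF e_in_set0 cards0 /=; ring. Qed.

Lemma Cj_elem j (x : V) : ((comm1 x, j), x.2) \in Cj j.
Proof. by rewrite inE. Qed.

Hypothesis hs : (2 <= n1 * m)%N.

Lemma exists_other (v : V) : exists y, y \in Cj (comm2 v) :\ v.
Proof.
apply/set0Pn; rewrite -card_gt0.
have := cardsD1 v (Cj (comm2 v)); rewrite card_Cj inE eqxx /=; lia.
Qed.

Lemma Xnot (v : V) : Cj (comm2 v) :\ v \notin P0.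
Proof.
apply/negP => XP; have [y yX] := exists_other v.
have E := blockE _ _ XP yX; move: yX; rewrite in_setD1 inE => /andP[_ /eqP ey].
rewrite ey in E.
have : v \in Cj (comm2 v) :\ v by rewrite E inE.
by rewrite in_setD1 eqxx.
Qed.

Lemma Xnot2 (u v : V) : comm2 u != comm2 v -> v |: (Cj (comm2 u) :\ u) \notin P0.
Proof.
move=> huv; apply/negP => XP; have [y yX] := exists_other u.
have E := blockE _ _ XP (setU11 _ _).
have : y \in v |: (Cj (comm2 u) :\ u) by rewrite setU1r.
rewrite E inE => /eqP ey; move: yX; rewrite in_setD1 inE ey => /andP[_ /eqP].
by move=> e; move: huv; rewrite e eqxx.
Qed.

Lemma card_D1 (v : V) : (#|Cj (comm2 v) :\ v|)%:R = ss - 1.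
Proof.
have := cardsD1 v (Cj (comm2 v)); rewrite card_Cj inE eqxx /=.
move=> /(congr1 (fun k : nat => k%:R : R)); rewrite natrD /ss => ->; rewrite /=; ring.
Qed.

Lemma main_sec : (4 <= n1)%N -> (4 <= n2)%N -> (2 <= m)%N ->
  1 / 20 <= p1 -> p1 <= 1 -> 1 / 20 <= p2 -> p2 <= 1 ->
  (forall C, C \in P0 -> e_out p1 p2 C < 3 * e_in p1 p2 C) ->
  forall P' : {set {set V}}, close_partition P0 P' ->
    modularity p1 p2 P' < modularity p1 p2 P0.
Proof.
move=> h1 h2 hm hp1 hp1' hp2 hp2' Hyp P' Hcl.
have j0 : 'I_n2 by exists 0%N; apply: leq_trans h2.
have Hh := Hyp _ (Cj_in j0); rewrite e_out_Cj e_in_Cj in Hh.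
have r1 : 4 <= n1%:R :> R by rewrite (ler_nat R 4).
have r2 : 4 <= n2%:R :> R by rewrite (ler_nat R 4).
have rm : 2 <= m%:R :> R by rewrite (ler_nat R 2).
have ssE : ss = n1%:R * m%:R by rewrite /ss natrM.
have NNE : NN = n2%:R * ss by rewrite /NN ssE !natrM; ring.
have ss_gt0 : 0 < ss by rewrite ssE; nra.
have bb_gt0 : 0 < bb by rewrite /bb; nra.
have DaE : DD - aa = (n2%:R - 1) * bb by rewrite /DD /aa /bb; ring.
have Hh' : ss * ((n2%:R - 1) * bb) < ss * (3 * aa / 2).
  by rewrite -DaE; lra.
rewrite ltr_pM2l // in Hh'.
have h3b : 3 * bb <= (n2%:R - 1) * bb by nra.
have hab : bb < aa by lra.
have aa_gt0 : 0 < aa by lra.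
have DDE : DD = aa + (n2%:R - 1) * bb by rewrite -DaE; ring.
have DD_gt0 : 0 < DD by nra.
have NN_gt0 : 0 < NN by rewrite NNE; nra.
have K_gt0 : 0 < NN ^+ 2 * DD by rewrite mulr_gt0 // exprn_gt0.
rewrite !modularity_FF //.
case: Hcl => [[v [C [CP [CB ->]]]] | [[u [v [Buv ->]]] | [v [_ ->]]]].
-
  rewrite pblockE in CB; rewrite /move_node pblockE sum_D0 ?FF0 //.
  have [jc _ CE] := imsetP CP.
  have CE' : C = Cj jc by rewrite CE.
  have hvc : comm2 v != jc.
    by apply: contraNneq CB => e; rewrite CE' e.
  have vB : v \in Cj (comm2 v) by rewrite inE.
  have vC : v \notin C by rewrite CE' inE.
  apply: sum_swap => //.
  + exact: Cj_in.
  + by rewrite eq_sym.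
  + exact: Xnot.
  + apply/negP => YP; have E := blockE _ _ YP (setU11 v C).
    have : ((comm1 v, jc), v.2) \in v |: C by rewrite setU1r // CE' Cj_elem.
    by rewrite E inE /comm2 /= eq_sym (negbTE hvc).
  + apply/eqP => E; have : v \in Cj (comm2 v) :\ v by rewrite E setU11.
    by rewrite in_setD1 eqxx.
  + rewrite /FF e_inD1 // e_inU1 // ws_same CE' ws_diff // !e_in_Cj.
    rewrite -CE' cardsU1 vC natrD card_D1 CE' !card_Cj -/ss /=.
    rewrite -!mulrDl ltr_pM2r ?invr_gt0 //.
    have : 0 < NN * (aa - bb) by rewrite mulr_gt0 // subr_gt0.
    nra.
-
  rewrite !pblockE in Buv; rewrite /exchange_nodes !pblockE.
  have huv : comm2 u != comm2 v by apply: contraNneq Buv => ->.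
  have hvu : comm2 v != comm2 u by rewrite eq_sym.
  have vBu : v \notin Cj (comm2 u) :\ u by rewrite in_setD1 inE (negbTE hvu) andbF.
  have uBv : u \notin Cj (comm2 v) :\ v by rewrite in_setD1 inE (negbTE huv) andbF.
  apply: sum_swap => //.
  + exact: Cj_in.
  + exact: Cj_in.
  + exact: Xnot2.
  + exact: Xnot2.
  + apply/eqP => E; have : u \in u |: (Cj (comm2 v) :\ v) by rewrite setU11.
    rewrite -E in_setU1 in_setD1 eqxx /= orbF; apply/negP.
    by apply: contra huv => /eqP ->.
  + have wsu : ws v (Cj (comm2 u) :\ u) = bb - w v u.
      have := ws_diff v _ hvu; rewrite /ws (big_setD1 u) /=; [move=> h; lra | by rewrite inE].
    have wsv : ws u (Cj (comm2 v) :\ v) = bb - w u v.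
      have := ws_diff u _ huv; rewrite /ws (big_setD1 v) /=; [move=> h; lra | by rewrite inE].
    have w1 : 0 <= w v u by apply: w_ge0; apply/andP; split => //; lra.
    have w2 : 0 <= w u v by apply: w_ge0; apply/andP; split => //; lra.
    rewrite /FF !e_inU1 // wsu wsv !e_inD1 ?inE // !ws_same !e_in_Cj.
    rewrite !cardsU1 vBu uBv !natrD !card_D1 !card_Cj -/ss /=.
    rewrite -!mulrDl ltr_pM2r ?invr_gt0 //.
    have : 0 < NN * (aa - bb) by rewrite mulr_gt0 // subr_gt0.
    nra.
-
  rewrite /separate_node pblockE.
  apply: sum_swap1 => //.
  + exact: Cj_in.
  + exact: Xnot.
  + apply/negP => YP; have E := blockE _ _ YP (set11 v).
    have [y] := exists_other v; rewrite -E in_setD1 inE => /andP[/negbTE -> //].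
  + apply/eqP => E; have : v \in Cj (comm2 v) :\ v by rewrite E set11.
    by rewrite in_setD1 eqxx.
  + rewrite /FF e_inD1 ?inE // ws_same e_in_set1 !e_in_Cj card_D1 cards1 card_Cj -/ss /=.
    rewrite -!mulrDl ltr_pM2r ?invr_gt0 //.
    have hD : DD < n2%:R * aa by nra.
    have : DD * ss < n2%:R * aa * ss by rewrite ltr_pM2r.
    rewrite NNE; nra.
Qed.
End S.

Theorem theorem10 (R : realFieldType) (n1 n2 m : nat) (p1 p2 : R) :
  (4 <= n1)%N -> (4 <= n2)%N ->
  (* n >= 2 n1 n2 with n = n1 * n2 * m *)
  (2 <= m)%N ->
  1 / 20 <= p1 -> p1 <= 1 ->
  1 / 20 <= p2 -> p2 <= 1 ->
  (* 3 e_22 > e_2out for the communities of layer l2 *)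
  (forall C, C \in layer2_partition n1 n2 m ->
     e_out p1 p2 C < 3 * e_in p1 p2 C) ->
  forall P' : {set {set node n1 n2 m}},
    close_partition (layer2_partition n1 n2 m) P' ->
    modularity p1 p2 P' < modularity p1 p2 (layer2_partition n1 n2 m).
Proof.
move=> h1 h2 hm.
have hs : (2 <= n1 * m)%N by nia.
exact: (@main_sec R n1 n2 m p1 p2 hs h1 h2 hm).
Qed.
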